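(* Let $n\ge 1$ be an integer, $S$ a finite set of $n\times n$ unitary matrices, $T$ a finite set, $g:S\to T$ a function, $q\ge 1$ an integer and $0\le\varepsilon\le 1$. Then a $(q,\varepsilon)$-QQA for $g$ exists if and only if the semidefinite feasibility problem $P(g,q,\varepsilon)$ has a feasible solution. Furthermore, for each feasible solution $\langle\{\rho^{IQ}(t)\}_{t},\rho^I(q),\{\Gamma_z\}_{z\in T}\rangle$ of $P(g,q,\varepsilon)$ there is a $(q,\varepsilon)$-QQA computing $g$ whose workspace dimension is no larger than the greater of $|S|n$ and $\lceil \sum_{z\in T}\mathrm{rank}(\Gamma_z)/n\rceil$. Since the latter is at most $\lceil |S||T|/n\rceil$, any $(q,\varepsilon)$-QQA computing $g$ can be implemented with workspace dimension at most $\max\{|S|n,\lceil |S||T|/n\rceil\}$ in addition to the $n$-dimensional query register.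
   Context: Query model: a $q$-query quantum algorithm (QQA) for $g$ consists of a workspace dimension $|W|$, unitaries $U_0,U_1,\dots,U_q$ acting on $Q\otimes W=\mathbb{C}^n\otimes\mathbb{C}^{|W|}$ (standard bases $\{|i\rangle\}$, $\{|j\rangle\}$), and a projective measurement $\{P_z\}_{z\in T}$ on $Q\otimes W$ (orthogonal projectors with $\sum_z P_z=I$). On input $X\in S$ the final state is $|\Phi_X(q)\rangle=U_q(X\otimes I)U_{q-1}(X\otimes I)\cdots U_1(X\otimes I)U_0|0\rangle|0\rangle$, and the outcome $z$ is obtained with probability $\langle\Phi_X(q)|P_z|\Phi_X(q)\rangle$. The QQA is a $(q,\varepsilon)$-QQA for $g$ (it $\varepsilon$-computes $g$) if $\langle\Phi_X(q)|P_{g(X)}|\Phi_X(q)\rangle\ge 1-\varepsilon$ for every $X\in S$. Let $I=\mathbb{C}^{S}$ with orthonormal basis $\{|X\rangle\}_{X\in S}$, and let $\Omega$ be the unitary on $I\otimes Q$ given by $\Omega|X\rangle|i\rangle=|X\rangle X|i\rangle$ (block diagonal with diagonal blocks the matrices $X\in S$). $\mathrm{tr}_Q$ denotes the partial trace over $Q$, $E$ the $|S|\times|S|$ all-ones matrix, $*$ the entrywise (Hadamard) product, and for $z\in T$, $\Delta_z$ the diagonal $|S|\times|S|$ matrix with $\Delta_z[X,X]=1$ if $g(X)=z$ and $0$ otherwise. $P(g,q,\varepsilon)$: find positive semidefinite Hermitian $|S|n\times|S|n$ matrices $\rho^{IQ}(t)$, $t=0,\dots,q-1$ (operators on $I\otimes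 Q$), a PSD $|S|\times|S|$ matrix $\rho^I(q)$, and PSD $|S|\times|S|$ matrices $\Gamma_z$ ($z\in T$) such that $\mathrm{tr}_Q\rho^{IQ}(0)=E$; $\mathrm{tr}_Q\rho^{IQ}(t)=\mathrm{tr}_Q\,\Omega\rho^{IQ}(t-1)\Omega^\dagger$ for $1\le t\le q-1$; $\rho^I(q)=\mathrm{tr}_Q\,\Omega\rho^{IQ}(q-1)\Omega^\dagger$; $\sum_{z\in T}\Gamma_z=\rho^I(q)$; and $\Delta_z*\Gamma_z\succeq(1-\varepsilon)\Delta_z$ for all $z\in T$. *)

(* Defs.v *)
(* Complex scalars: an arbitrary numClosedFieldType C
   (e.g. complex numbers R[i] over the reals), the library's setting for
   unitary matrices (spectral.v). *)
From HB Require Import structures.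
From mathcomp Require Import all_boot all_order all_algebra.
From mathcomp.real_closed Require mxtens.

Set Implicit Arguments.
Unset Strict Implicit.
Unset Printing Implicit Defensive.

Import Order.TTheory GRing.Theory Num.Theory.
Local Open Scope ring_scope.

Section QQA.
Variable C : numClosedFieldType.

Definition adjmx {p r : nat} (A : 'M[C]_(p, r)) : 'M[C]_(r, p) :=
  map_mx Num.conj (A^T).

Definition psdmx {p : nat} (A : 'M[C]_p) : Prop :=
  adjmx A = A /\ forall v : 'cV[C]_p, 0 <= (adjmx v *m A *m v) 0 0.

Definition loewner_ge {p : nat} (A B : 'M[C]_p) : Prop := psdmx (A - B).

Definition orth_proj {p : nat} (P : 'M[C]_p) : Prop :=
  adjmx P = P /\ P *m P = P.

Definition basis_cv (p i : nat) : 'cV[C]_p := \col_(k < p) ((k : nat) == i)%:R.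

(* Kronecker product (index (i,j) of 'I_(p*r) is i*r + j) *)
Definition kron {p1 r1 p2 r2 : nat} (A : 'M[C]_(p1, r1)) (B : 'M[C]_(p2, r2))
  : 'M[C]_(p1 * p2, r1 * r2) := mxtens.tensmx A B.

Fixpoint qqa_state (n w : nat) (X : 'M[C]_n) (U : nat -> 'M[C]_(n * w)) (t : nat)
  : 'cV[C]_(n * w) :=
  match t with
  | 0 => U 0%N *m kron (basis_cv n 0) (basis_cv w 0)
  | t'.+1 => U t'.+1 *m (kron X (1%:M : 'M[C]_w) *m qqa_state X U t')
  end.

(* (U_0..U_q, {P_z}) with workspace dimension w is a (q,eps)-QQA for g,
   where S = {Xs s | s < m} *)
Definition is_QQA (n m : nat) (Xs : 'I_m -> 'M[C]_n) (T : finType) (g : 'I_m -> T)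
  (q : nat) (eps : C) (w : nat) (U : nat -> 'M[C]_(n * w)) (P : T -> 'M[C]_(n * w))
  : Prop :=
  [/\ (forall t, (t <= q)%N -> U t \is unitarymx),
      (forall z, orth_proj (P z)),
      \sum_(z : T) P z = 1%:M &
      forall s : 'I_m,
        1 - eps <= (adjmx (qqa_state (Xs s) U q) *m P (g s) *m qqa_state (Xs s) U q) 0 0].

Definition QQA_exists (n m : nat) (Xs : 'I_m -> 'M[C]_n) (T : finType) (g : 'I_m -> T)
  (q : nat) (eps : C) (w : nat) : Prop :=
  (0 < w)%N /\ exists U P, @is_QQA n m Xs T g q eps w U P.

Definition ptraceQ (m n : nat) (A : 'M[C]_(m * n)) : 'M[C]_m :=
  \matrix_(a < m, b < m)
    \sum_(i < n) A (mxtens.mxtens_index (a, i)) (mxtens.mxtens_index (b, i)).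

Definition Omega (n m : nat) (Xs : 'I_m -> 'M[C]_n) : 'M[C]_(m * n) :=
  \sum_(s < m) kron (delta_mx s s : 'M[C]_m) (Xs s).

Definition Delta (m : nat) (T : finType) (g : 'I_m -> T) (z : T) : 'M[C]_m :=
  diag_mx (\row_(s < m) ((g s == z)%:R : C)).

Definition hadamard (p : nat) (A B : 'M[C]_p) : 'M[C]_p :=
  \matrix_(i, j) (A i j * B i j).

Definition P_feasible_sol (n m : nat) (Xs : 'I_m -> 'M[C]_n) (T : finType)
  (g : 'I_m -> T) (q : nat) (eps : C)
  (rho : nat -> 'M[C]_(m * n)) (rhoI : 'M[C]_m) (Gam : T -> 'M[C]_m) : Prop :=
  let Om := Omega Xs in
  (forall t, (t < q)%N -> psdmx (rho t)) /\
  psdmx rhoI /\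
  (forall z, psdmx (Gam z)) /\
  ptraceQ (rho 0%N) = const_mx 1 /\
  (forall t, (0 < t < q)%N ->
     ptraceQ (rho t) = ptraceQ (Om *m rho t.-1 *m adjmx Om)) /\
  rhoI = ptraceQ (Om *m rho q.-1 *m adjmx Om) /\
  \sum_(z : T) Gam z = rhoI /\
  (forall z, loewner_ge (hadamard (Delta g z) (Gam z)) ((1 - eps) *: Delta g z)).

Definition P_feasible (n m : nat) (Xs : 'I_m -> 'M[C]_n) (T : finType)
  (g : 'I_m -> T) (q : nat) (eps : C) : Prop :=
  exists rho rhoI Gam, @P_feasible_sol n m Xs T g q eps rho rhoI Gam.

End QQA.

Definition ceil_div (a b : nat) : nat := (a + b.-1) %/ b.

(* Main.v *)
Require Import Defs.
From HB Require Import structures.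
From mathcomp Require Import all_boot all_order all_algebra.
From mathcomp.real_closed Require Import mxtens.
From mathcomp Require Import zify.
Set Implicit Arguments.
Unset Strict Implicit.
Unset Printing Implicit Defensive.
Import Order.TTheory GRing.Theory Num.Theory Num.Def.
Local Open Scope ring_scope.
Local Open Scope sesquilinear_scope.


Local Notation "B ^!" :=
  (orthomx conjC (mx_of_hermitian (hermitian1mx _)) B) : matrix_set_scope.


Section LinAlg.
Variable C : numClosedFieldType.

Lemma adjmx_mul p r s (A : 'M[C]_(p, r)) (B : 'M[C]_(r, s)) :
  (A *m B)^t* = B^t* *m A^t*.
Proof. by rewrite trmx_mul map_mxM. Qed.

Lemma YY0 p q (Y : 'M[C]_(p, q)) : Y *m Y^t* = 0 -> Y = 0.
Proof.
move=> H; apply/matrixP => i j; rewrite mxE.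
have /matrixP/(_ i i) := H; rewrite !mxE => HS.
have Hge : forall k : 'I_q, true -> 0 <= Y i k * (Y^t*) k i.
  by move=> k _; rewrite !mxE mul_conjC_ge0.
have := psumr_eq0P Hge HS (i:=j) isT.
rewrite !mxE => /eqP; rewrite mul_conjC_eq0; exact/eqP.
Qed.

Lemma rank_YY p q (Y : 'M[C]_(p, q)) : (\rank Y <= \rank (Y *m Y^t*))%N.
Proof.
have sub : (kermx (Y *m Y^t*) <= kermx Y)%MS.
  apply/sub_kermxP; apply: YY0.
  rewrite adjmx_mul mulmxA -(mulmxA _ Y) mulmx_ker mul0mx //.
have := mxrankS sub; rewrite !mxrank_ker.
have := rank_leq_row (Y *m Y^t*); have := rank_leq_row Y; lia.
Qed.

Lemma psd_YY p q (Y : 'M[C]_(p, q)) : psdmx (Y *m Y^t*).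
Proof.
split; first by rewrite /adjmx -/(_ ^t* ) adjmx_mul trmxCK.
move=> v; rewrite /adjmx -/(_ ^t* ).
have -> : v^t* *m (Y *m Y^t*) *m v = (v^t* *m Y) *m (v^t* *m Y)^t*.
  by rewrite adjmx_mul trmxCK !mulmxA.
rewrite !mxE sumr_ge0 // => i _; rewrite !mxE mul_conjC_ge0 //.
Qed.

Lemma psd_factor p (A : 'M[C]_p) : psdmx A -> exists B : 'M[C]_p, A = B *m B^t*.
Proof.
move=> [Ah Apos].
have Ah' : A^t* = A := Ah.
have An : A \is normalmx by apply/normalmxP; rewrite Ah'.
have /orthomx_spectralP := An.
set P := spectralmx A; set d := spectral_diag A => AE.
have Pu : P \is unitarymx := spectral_unitarymx A.
rewrite invmx_unitary // in AE.
have DE : diag_mx d = P *m A *m P^t*.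
  by rewrite AE !mulmxA (unitarymxP Pu) mul1mx -mulmxA (unitarymxP Pu) mulmx1.
have dpos : forall i, 0 <= d 0 i.
  move=> i; have := Apos (\col_k ((P i k)^* )).
  suff -> : (adjmx (\col_k (P i k)^*) *m A *m \col_k (P i k)^*) 0 0 = d 0 i by [].
  have -> : d 0 i = diag_mx d i i by rewrite mxE eqxx mulr1n.
  rewrite DE !mxE; apply: eq_bigr => l _; rewrite !mxE; congr (_ * _).
  by apply: eq_bigr => k _; rewrite !mxE conjCK.
exists (P^t* *m diag_mx (\row_i sqrtC (d 0 i))).
rewrite adjmx_mul trmxCK.
have -> : (diag_mx (\row_i sqrtC (d 0 i)))^t* = diag_mx (\row_i sqrtC (d 0 i)).
  apply/matrixP => a b; rewrite !mxE.
  have [->|ne] := eqVneq a b; first by rewrite !mulr1n geC0_conj // sqrtC_ge0.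
  by rewrite !mulr0n conjC0.
rewrite !mulmxA -(mulmxA (P^t*)) mulmx_diag.
rewrite AE; congr (_ *m _ *m _); congr diag_mx; apply/rowP => i.
by rewrite !mxE -expr2 sqrtCK.
Qed.


Lemma adj_col_mx p1 p2 q (A : 'M[C]_(p1, q)) (B : 'M[C]_(p2, q)) :
  (col_mx A B)^t* = row_mx (A^t*) (B^t*).
Proof. by rewrite tr_col_mx map_row_mx. Qed.

Lemma col_mx_unitary p1 p2 q (A : 'M[C]_(p1, q)) (B : 'M[C]_(p2, q)) :
  A \is unitarymx -> B \is unitarymx -> A *m B^t* = 0 ->
  col_mx A B \is unitarymx.
Proof.
move=> /unitarymxP Au /unitarymxP Bu AB; apply/unitarymxP.
have BA : B *m A^t* = 0.
  by have := congr1 (fun M => M^t* ) AB; rewrite /= adjmx_mul trmxCK => ->; rewrite trmx0 map_mx0.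
by rewrite adj_col_mx mul_col_row Au Bu AB BA -scalar_mx_block.
Qed.

Lemma ortho_compl k N (E : 'M[C]_(k, N)) : E \is unitarymx ->
  exists S : 'M[C]_(N - k, N), S \is unitarymx /\ E *m S^t* = 0.
Proof.
move=> Eu.
have ES1 : (E <= schmidt (row_base E))%MS.
  apply: submx_trans (schmidt_sub _); by rewrite eq_row_base.
have := schmidt_complete_unitarymx E; rewrite /schmidt_complete.
move: (schmidt (row_base E)) ES1 => S1 ES1.
move: (schmidt (row_base (E^!)%MS)) => S2 /unitarymxP.
rewrite adj_col_mx mul_col_row scalar_mx_block => /eq_block_mx [_ S12 _ S22].
have ES2 : E *m S2^t* = 0.
  have [D DE] := submxP ES1.
  have -> : E *m S2^t* = D *m (S1 *m S2^t*) by rewrite mulmxA -DE.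
  by rewrite S12 mulmx0.
have S2u : S2 \is unitarymx by apply/unitarymxP.
have hr : \rank (E^!)%MS = (N - k)%N by rewrite rank_ortho (mxrank_unitary Eu).
clear S12 S22; move: S2 S2u ES2; rewrite hr => S2 S2u ES2.
by exists S2.
Qed.

Lemma unitary_ext k N (E F : 'M[C]_(k, N)) :
  E \is unitarymx -> F \is unitarymx ->
  exists V : 'M[C]_N, V \is unitarymx /\ E *m V = F.
Proof.
move=> Eu Fu.
have kN : (k <= N)%N by rewrite -(mxrank_unitary Eu) rank_leq_col.
have [SE [SEu ESE]] := ortho_compl Eu.
have [SF [SFu FSF]] := ortho_compl Fu.
have QEu := col_mx_unitary Eu SEu ESE.
have QFu := col_mx_unitary Fu SFu FSF.
exists ((col_mx E SE)^t* *m col_mx F SF); split.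
  apply/unitarymxP; rewrite adjmx_mul trmxCK mulmxA -(mulmxA _ (col_mx F SF)).
  rewrite (unitarymxP QFu) mulmx1.
  have := mulmxKtV (1%:M : 'M_N) QEu (subnKC kN); rewrite mul1mx => -> //.
rewrite mulmxA adj_col_mx mul_mx_row (unitarymxP Eu) ESE mul_row_col.
by rewrite mul1mx mul0mx addr0.
Qed.

Lemma gram_ext m N (A B : 'M[C]_(m, N)) : A *m A^t* = B *m B^t* ->
  exists V : 'M[C]_N, V \is unitarymx /\ A *m V = B.
Proof.
have fact : forall A : 'M[C]_(m, N), exists r (E : 'M[C]_(r, N)) (X : 'M[C]_(m, r)),
    [/\ E \is unitarymx, A = X *m E & row_full X].
  move=> A0; exists (\rank A0), (schmidt (row_base A0)).
  have ES1 : (A0 <= schmidt (row_base A0))%MS.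
    apply: submx_trans (schmidt_sub _); by rewrite eq_row_base.
  have [D DE] := submxP ES1; exists D; split => //.
    by apply: schmidt_unitarymx; rewrite rank_leq_col.
  rewrite /row_full eqn_leq rank_leq_col /=.
  by rewrite {1}DE; apply: mxrankM_maxl.
move=> AB.
have [rA [EA [XA [EAu AE XAf]]]] := fact A.
have [rB [EB [XB [EBu BE XBf]]]] := fact B.
have [L LX] := row_fullP XAf.
have GA : A *m A^t* = XA *m XA^t*.
  by rewrite AE adjmx_mul mulmxA -(mulmxA XA) (unitarymxP EAu) mulmx1.
have GB : B *m B^t* = XB *m XB^t*.
  by rewrite BE adjmx_mul mulmxA -(mulmxA XB) (unitarymxP EBu) mulmx1.
have KX : (1%:M - XA *m L) *m XA = 0.
  by rewrite mulmxBl mul1mx -mulmxA LX mulmx1 subrr.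
have KXB : (1%:M - XA *m L) *m XB = 0.
  apply: YY0; rewrite adjmx_mul mulmxA -(mulmxA _ XB) -GB -AB GA.
  by rewrite mulmxA KX !mul0mx.
have XBE : XB = XA *m (L *m XB).
  by move/eqP: KXB; rewrite mulmxBl mul1mx subr_eq0 mulmxA => /eqP.
have Fu : (L *m XB) *m EB \is unitarymx.
  apply/unitarymxP; rewrite adjmx_mul mulmxA -(mulmxA _ EB) (unitarymxP EBu) mulmx1.
  rewrite adjmx_mul mulmxA -(mulmxA L) -GB -AB GA mulmxA LX mul1mx.
  by rewrite -adjmx_mul LX /= trmx1 map_mx1.
have [V [Vu EV]] := unitary_ext EAu Fu.
exists V; split => //.
by rewrite AE -mulmxA EV mulmxA -XBE BE.
Qed.

Lemma adj_mul_col N (u v : 'cV[C]_N) :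
  (adjmx u *m v) 0 0 = \sum_j (u j 0)^* * v j 0.
Proof. by rewrite mxE; apply: eq_bigr => j _; rewrite !mxE. Qed.

Lemma gram_ext_col m N (f g : 'I_m -> 'cV[C]_N) :
  (forall a b, adjmx (f b) *m f a = adjmx (g b) *m g a) ->
  exists U : 'M[C]_N, U \is unitarymx /\ forall a, U *m f a = g a.
Proof.
move=> H.
pose A := \matrix_(a < m, c < N) f a c 0.
pose B := \matrix_(a < m, c < N) g a c 0.
have AB : A *m A^t* = B *m B^t*.
  apply/matrixP => a b; have /matrixP/(_ 0 0) := H a b; rewrite !adj_mul_col => E.
  rewrite !mxE; transitivity (\sum_j (f b j 0)^* * f a j 0).
    by apply: eq_bigr => j _; rewrite !mxE mulrC.
  rewrite E; by apply: eq_bigr => j _; rewrite !mxE mulrC.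
have [V [Vu AV]] := gram_ext AB.
exists V^T; split; first by rewrite trmx_unitary.
move=> a; apply/matrixP => c j; rewrite (ord1 j).
have /matrixP/(_ a c) := AV; rewrite !mxE => <-.
by apply: eq_bigr => d _; rewrite !mxE mulrC.
Qed.

End LinAlg.



Section Tens.
Variable C : numClosedFieldType.

Lemma sum_tens p r (F : 'I_(p * r) -> C) :
  \sum_c F c = \sum_(i < p) \sum_(k < r) F (mxtens_index (i, k)).
Proof.
rewrite pair_big /= (reindex (@mxtens_index p r)) /=.
  by apply: eq_bigr => -[i k].
by exists (@mxtens_unindex p r) => x _; rewrite (mxtens_indexK, mxtens_unindexK).
Qed.

Definition rowsM m N (f : 'I_m -> 'cV[C]_N) : 'M[C]_(m, N) := \matrix_(a, c) f a c 0.

Lemma rowsM_gram m N (f g : 'I_m -> 'cV[C]_N) a b :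
  (rowsM f *m (rowsM g)^t*) a b = (adjmx (g b) *m f a) 0 0.
Proof. by rewrite adj_mul_col mxE; apply: eq_bigr => j _; rewrite !mxE mulrC. Qed.

Lemma quad_T m N (f : 'I_m -> 'cV[C]_N) (A : 'M[C]_N) a :
  (rowsM f *m A^T *m (rowsM f)^t*) a a = (adjmx (f a) *m A *m f a) 0 0.
Proof.
rewrite !mxE.
transitivity (\sum_d \sum_c (f a c 0 * A d c) * (f a d 0)^*).
  by apply: eq_bigr => d _; rewrite !mxE mulr_suml; apply: eq_bigr => c _; rewrite !mxE.
rewrite exchange_big /=; apply: eq_bigr => c _; rewrite !mxE mulr_suml.
by apply: eq_bigr => d _; rewrite !mxE [LHS]mulrC [LHS]mulrA [LHS]mulrAC.
Qed.

Variables (n w m : nat).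

Definition vecM (M : 'M[C]_(m * n, w)) (a : 'I_m) : 'cV[C]_(n * w) :=
  \col_c M (mxtens_index (a, (@mxtens_unindex n w c).1)) (@mxtens_unindex n w c).2.

Lemma vecM_idx M a i k : vecM M a (mxtens_index (i, k)) 0 = M (mxtens_index (a, i)) k.
Proof. by rewrite mxE mxtens_indexK. Qed.

Lemma ptrace_vec (M M' : 'M[C]_(m * n, w)) a b :
  ptraceQ (M *m M'^t*) a b = (adjmx (vecM M' b) *m vecM M a) 0 0.
Proof.
rewrite adj_mul_col sum_tens mxE; apply: eq_bigr => i _.
rewrite mxE; apply: eq_bigr => k _; rewrite !vecM_idx !mxE mulrC //.
Qed.

Lemma ptrace_rows (M M' : 'M[C]_(m * n, w)) :
  ptraceQ (M *m M'^t*) = rowsM (vecM M) *m (rowsM (vecM M'))^t*.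
Proof. by apply/matrixP => a b; rewrite rowsM_gram ptrace_vec. Qed.

Lemma Omega_idx (Xs : 'I_m -> 'M[C]_n) a i b j :
  Omega Xs (mxtens_index (a, i)) (mxtens_index (b, j)) = (a == b)%:R * Xs a i j.
Proof.
rewrite /Omega summxE (bigD1 a) //= big1 => [|s sa].
  by rewrite /kron tensmxE !mxE eqxx addr0 /= eq_sym.
rewrite /kron tensmxE !mxE eq_sym (negPf sa) /= mul0r //.
Qed.

Lemma vec_Omega (Xs : 'I_m -> 'M[C]_n) (M : 'M[C]_(m * n, w)) a :
  vecM (Omega Xs *m M) a = kron (Xs a) (1%:M : 'M[C]_w) *m vecM M a.
Proof.
apply/matrixP => c j; rewrite (ord1 j); case: (mxtens_indexP c) => i k.
rewrite vecM_idx !mxE !sum_tens.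
rewrite (bigD1 a) //= [X in _ + X]big1 => [|b ba]; last first.
  by apply: big1 => l _; rewrite Omega_idx eq_sym (negPf ba) !mul0r.
rewrite addr0; apply: eq_bigr => l _.
rewrite Omega_idx eqxx mul1r (bigD1 k) //= [X in _ + X]big1 => [|k' kk'].
  by rewrite addr0 /kron tensmxE !mxE eqxx mulr1 mxtens_indexK.
by rewrite /kron /tensmx !mxE !mxtens_indexK /= eq_sym (negPf kk') mulr0 mul0r.
Qed.

End Tens.



Section Final.
Variable C : numClosedFieldType.

Lemma pid_adj p q r : (pid_mx r : 'M[C]_(p, q))^t* = pid_mx r.
Proof.
apply/matrixP => i j; rewrite !mxE conjC_nat.
by have [E|ne] := eqVneq (i : nat) (j : nat); rewrite ?E.
Qed.

Lemma pid_unit p q : (p <= q)%N -> (pid_mx p : 'M[C]_(p, q)) *m (pid_mx p)^t* = 1%:M.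
Proof. by move=> pq; rewrite pid_adj pid_mx_id // pid_mx_1. Qed.

Lemma pid_diag S N (SN : (S <= N)%N) (d : 'rV[C]_N) :
  (pid_mx S : 'M[C]_(S, N)) *m diag_mx d *m (pid_mx S)^t* =
  diag_mx (\row_(s < S) d 0 (widen_ord SN s)).
Proof.
rewrite pid_adj mul_mx_diag; apply/matrixP => s s'; rewrite !mxE.
rewrite (bigD1 (widen_ord SN s)) //= big1 => [|c cs].
  rewrite !mxE /= eqxx ltn_ord /= addr0 mul1r andbT.
  have [->|ne] := eqVneq s s'; first by rewrite eqxx mulr1 mulr1n.
  have -> : (s == s' :> nat) = false by exact: negPf ne.
  by rewrite mulr0 mulr0n.
rewrite !mxE; have -> : (s == c :> nat) = false.
  by apply/negP => /eqP E; move: cs; rewrite (_ : c = widen_ord SN s) ?eqxx //; apply: val_inj.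
by rewrite !mul0r.
Qed.

Lemma adj_mxrow (K : nat) (p_ : 'I_K -> nat) m (B_ : forall j, 'M[C]_(m, p_ j)) :
  (\mxrow_j B_ j)^t* = \mxcol_j (B_ j)^t*.
Proof. by rewrite tr_mxrow; apply/matrixP => i j; rewrite !mxE. Qed.

Lemma final_meas (m N : nat) (T : finType) (z0 : T) (Gam : T -> 'M[C]_m) :
  (forall z, psdmx (Gam z)) -> (\sum_z \rank (Gam z) <= N)%N ->
  exists (F : 'M[C]_(m, N)) (P : T -> 'M[C]_N),
    [/\ F *m F^t* = \sum_z Gam z, (forall z, orth_proj (P z)), \sum_z P z = 1%:M,
        (forall z, (P z)^T = P z) & (forall z, F *m P z *m F^t* = Gam z)].
Proof.
move=> Gpsd RN.
have exB : forall z, exists B : 'M[C]_m, Gam z == B *m B^t*.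
  by move=> z; have [B ->] := psd_factor (Gpsd z); exists B.
pose Bz z := xchoose (exB z).
have BzE : forall z, Gam z = Bz z *m (Bz z)^t* by move=> z; apply/eqP; exact: xchooseP (exB z).
have exD : forall z, exists D : 'M[C]_(\rank (Bz z)),
    row_base (Bz z) *m (row_base (Bz z))^t* == D *m D^t*.
  by move=> z; have [D ->] := psd_factor (psd_YY (row_base (Bz z))); exists D.
pose Dz z := xchoose (exD z).
pose Gz z := col_base (Bz z) *m Dz z.
have GzE : forall z, Gz z *m (Gz z)^t* = Gam z.
  move=> z; rewrite adjmx_mul mulmxA -(mulmxA _ (Dz z)) -(eqP (xchooseP (exD z))).
  have -> : Gam z = (col_base (Bz z) *m row_base (Bz z)) *m
                    (col_base (Bz z) *m row_base (Bz z))^t* by rewrite mulmx_base BzE.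
  set cb := col_base _; set rb := row_base _.
  by rewrite !adjmx_mul !mulmxA.
pose p_ (j : 'I_#|T|) := \rank (Bz (enum_val j)).
pose Frow : 'M[C]_(m, \sum_j p_ j) := \mxrow_j Gz (enum_val j).
have SN : (\sum_j p_ j <= N)%N.
  apply: leq_trans RN.
  have -> : (\sum_z \rank (Gam z) = \sum_(j < #|T|) \rank (Gam (enum_val j)))%N
    by exact: (big_enum_val (A := T) (fun z => \rank (Gam z))).
  apply: leq_sum => j _.
  by rewrite /p_ BzE rank_YY.
pose S := (\sum_j p_ j)%N.
pose blk (c : 'I_N) : T := if @insub _ (fun x => x < S)%N 'I_S (val c) is Some s
   then enum_val (tagnat.sig1 s) else z0.
pose P z := diag_mx (\row_c ((blk c == z)%:R : C)).
pose F := Frow *m (pid_mx S : 'M[C]_(S, N)).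
have FrowE : Frow *m Frow^t* = \sum_z Gam z.
  rewrite adj_mxrow mul_mxrow_mxcol.
  have -> : \sum_z Gam z = \sum_(j < #|T|) Gam (enum_val j) by exact: (big_enum_val (A := T) Gam).
  by apply: eq_bigr => j _; rewrite GzE.
exists F, P; split.
- by rewrite /F adjmx_mul mulmxA -(mulmxA Frow) pid_unit // mulmx1.
- move=> z; split.
    apply/matrixP => i j; rewrite !mxE; have [->|ne] := eqVneq i j.
      by rewrite !mulr1n conjC_nat.
    by rewrite !mulr0n conjC0.
  rewrite mulmx_diag; congr diag_mx; apply/rowP => c; rewrite !mxE.
  by case: (blk c == z); rewrite ?mulr1 ?mulr0.
- apply/matrixP => i j; rewrite summxE !mxE.
  under eq_bigr do rewrite !mxE.
  have [->|ne] := eqVneq i j; last by rewrite big1 // => z _; rewrite mulr0n.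
  rewrite (bigD1 (blk j)) //= eqxx mulr1n big1 ?addr0 // => z.
  by rewrite eq_sym => /negPf ->; rewrite mulr0n.
- by move=> z; rewrite tr_diag_mx.
move=> z; rewrite /F adjmx_mul.
have -> : Frow *m pid_mx S *m P z *m ((pid_mx S)^t* *m Frow^t*) =
   Frow *m ((pid_mx S : 'M[C]_(S, N)) *m P z *m (pid_mx S)^t*) *m Frow^t*
  by rewrite !mulmxA.
rewrite (pid_diag SN).
have -> : \row_(s < S) (\row_c ((blk c == z)%:R : C)) 0 (widen_ord SN s)
    = \mxrow_j (const_mx ((enum_val j == z)%:R) : 'rV[C]_(p_ j)).
  apply/rowP => s; rewrite !mxE /blk /= valK //.
rewrite diag_mxrow; under eq_mxdiag do rewrite diag_const_mx.
rewrite mul_mxrow_mxdiag adj_mxrow mul_mxrow_mxcol.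
under eq_bigr do rewrite mul_mx_scalar -scalemxAl GzE.
rewrite (bigD1 (enum_rank z)) //= enum_rankK eqxx scale1r big1 ?addr0 // => j ne.
have -> : (enum_val j == z) = false.
  by apply/negP => /eqP E; move: ne; rewrite -E enum_valK eqxx.
by rewrite scale0r.
Qed.

End Final.



Lemma ceil_div_ge n a : (0 < n)%N -> (a <= n * ceil_div a n)%N.
Proof.
move=> n0; rewrite /ceil_div; have := divn_eq (a + n.-1) n.
have := ltn_pmod (a + n.-1) n0; lia.
Qed.

Section Misc.
Variable C : numClosedFieldType.

Lemma unitary1 p : (1%:M : 'M[C]_p) \is unitarymx.
Proof. by apply/unitarymxP; rewrite trmx1 map_mx1 mulmx1. Qed.

Lemma e00_gram n w : (0 < n)%N -> (0 < w)%N ->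
  adjmx (kron (basis_cv C n 0) (basis_cv C w 0)) *m kron (basis_cv C n 0) (basis_cv C w 0)
  = 1%:M :> 'M[C]_1.
Proof.
move=> n0 w0; apply/matrixP => i j; rewrite !ord1 adj_mul_col sum_tens mxE /=.
have E : forall (p : nat) (k : 'I_p), (basis_cv C p 0) k 0 = (k == 0 :> nat)%:R.
  by move=> p k; rewrite mxE.
rewrite (bigD1 (Ordinal n0)) //= [X in _ + X]big1 => [|i' ni]; last first.
  apply: big1 => k _; rewrite /kron /tensmx !mxE mxtens_indexK /=.
  have -> : (i' == 0 :> nat) = false.
    by apply/negP => /eqP e; move: ni; rewrite (_ : i' = Ordinal n0) ?eqxx //; apply: val_inj.
  by rewrite mul0r conjC0 mul0r.
rewrite addr0 (bigD1 (Ordinal w0)) //= [X in _ + X]big1 => [|k' nk]; last first.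
  rewrite /kron /tensmx !mxE mxtens_indexK /=.
  have -> : (k' == 0 :> nat) = false.
    by apply/negP => /eqP e; move: nk; rewrite (_ : k' = Ordinal w0) ?eqxx //; apply: val_inj.
  by rewrite mulr0 conjC0 mul0r.
by rewrite addr0 /kron /tensmx !mxE mxtens_indexK /= /= mulr1 conjC1 mulr1.
Qed.

Lemma quad_basis p (A : 'M[C]_p) i :
  (adjmx (delta_mx i 0 : 'cV[C]_p) *m A *m (delta_mx i 0 : 'cV[C]_p)) 0 0 = A i i.
Proof.
have -> : adjmx (delta_mx i 0 : 'cV[C]_p) = delta_mx 0 i.
  by apply/matrixP => a b; rewrite !mxE conjC_nat andbC.
by rewrite -rowE -colE !mxE.
Qed.

Lemma gram_unitary N (U : 'M[C]_N) (x y : 'cV[C]_N) : U \is unitarymx ->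
  adjmx (U *m x) *m (U *m y) = adjmx x *m y.
Proof.
move=> /unitarymxP Uu; rewrite /adjmx -/(_ ^t* ) adjmx_mul mulmxA -(mulmxA _ (U^t*)).
by rewrite (mulmx1C Uu) mulmx1.
Qed.

Lemma psd_diag p (d : 'rV[C]_p) : (forall i, 0 <= d 0 i) -> psdmx (diag_mx d).
Proof.
move=> dpos.
have -> : diag_mx d = diag_mx (\row_i sqrtC (d 0 i)) *m (diag_mx (\row_i sqrtC (d 0 i)))^t*.
  have -> : (diag_mx (\row_i sqrtC (d 0 i)))^t* = diag_mx (\row_i sqrtC (d 0 i)).
    apply/matrixP => a b; rewrite !mxE.
    have [->|ne] := eqVneq a b; first by rewrite !mulr1n geC0_conj // sqrtC_ge0.
    by rewrite !mulr0n conjC0.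
  rewrite mulmx_diag; congr diag_mx; apply/rowP => i.
  by rewrite !mxE -expr2 sqrtCK.
exact: psd_YY.
Qed.

End Misc.



Lemma construct (C : numClosedFieldType) (n m : nat) (Xs : 'I_m -> 'M[C]_n)
  (T : finType) (g : 'I_m -> T) (q : nat) (eps : C) rho rhoI Gam :
  (0 < n)%N -> (0 < m)%N -> (0 < q)%N -> P_feasible_sol Xs g q eps rho rhoI Gam ->
  exists w, (w <= maxn (m * n) (ceil_div (\sum_(z : T) \rank (Gam z)) n))%N
            /\ QQA_exists Xs g q eps w.
Proof.
move=> n0 m0 q0 [Hrho [HrhoI [HGam [H0 [Ht [HI [Hsum HL]]]]]]].
set R := (\sum_z \rank (Gam z))%N.
set w := maxn (m * n) (ceil_div R n).
exists w; split => //.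
have mnw : (m * n <= w)%N := leq_maxl _ _.
have w0 : (0 < w)%N by apply: leq_trans mnw; rewrite muln_gt0 m0 n0.
have RN : (R <= n * w)%N.
  by apply: (leq_trans (@ceil_div_ge n R n0)); rewrite leq_mul2l leq_maxr orbT.
have [F [P [FF Pproj Psum PT FPF]]] := final_meas (g (Ordinal m0)) HGam RN.
have exB : forall t, exists B : 'M[C]_(m * n), (t < q)%N ==> (rho t == B *m B^t*).
  move=> t; case: (ltnP t q) => tq; last by exists 0.
  by have [B ->] := psd_factor (Hrho t tq); exists B; rewrite eqxx.
pose Bt t := xchoose (exB t).
have BtE : forall t, (t < q)%N -> rho t = Bt t *m (Bt t)^t*.
  by move=> t tq; have /implyP/(_ tq)/eqP := xchooseP (exB t).
pose Emb : 'M[C]_(m * n, w) := pid_mx (m * n).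
have EmbE : Emb *m Emb^t* = 1%:M by apply: pid_unit.
pose psi t a := @vecM C n w m (Bt t *m Emb) a.
pose e00 : 'cV[C]_(n * w) := kron (basis_cv C n 0) (basis_cv C w 0).
pose phi a : 'cV[C]_(n * w) := \col_c F a c.
have FE : rowsM phi = F by apply/matrixP => x y; rewrite !mxE.
pose pre t a : 'cV[C]_(n * w) :=
  if t == 0%N then e00 else kron (Xs a) 1%:M *m psi t.-1 a.
pose post t a : 'cV[C]_(n * w) := if (t < q)%N then psi t a else phi a.
have gram : forall t, (t <= q)%N -> forall a b,
    adjmx (pre t b) *m pre t a = adjmx (post t b) *m post t a.
  move=> t tq a b; apply/matrixP => i j; rewrite !ord1.
  have Hpost : (adjmx (post t b) *m post t a) 0 0
      = if (t < q)%N then ptraceQ (rho t) a b else rhoI a b.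
    rewrite /post; case: ifP => tq'.
      by rewrite -ptrace_vec adjmx_mul mulmxA -(mulmxA (Bt t)) EmbE mulmx1 -BtE.
    by rewrite -Hsum -FF -FE rowsM_gram.
  rewrite Hpost /pre; case: eqP => [t0|tn0].
    by subst t; rewrite q0 H0 e00_gram // !mxE.
  have tq1 : (t.-1 < q)%N by lia.
  rewrite -!vec_Omega -ptrace_vec.
  have -> : Omega Xs *m (Bt t.-1 *m Emb) *m (Omega Xs *m (Bt t.-1 *m Emb))^t*
      = Omega Xs *m rho t.-1 *m (Omega Xs)^t*.
    by rewrite BtE // !adjmx_mul !mulmxA -(mulmxA _ Emb) EmbE mulmx1.
  case: ifP => tq'.
    by rewrite Ht //; apply/andP; split => //; lia.
  have -> : t = q by lia.
  by rewrite HI.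
have exU : forall t, exists U : 'M[C]_(n * w),
    (U \is unitarymx) && ((t <= q)%N ==> [forall a, U *m pre t a == post t a]).
  move=> t; case: (leqP t q) => tq; last by exists 1%:M; rewrite unitary1.
  have [U [Uu HU]] := gram_ext_col (gram t tq).
  by exists U; rewrite Uu /=; apply/forallP => a; rewrite HU.
pose U t := xchoose (exU t).
have Uu : forall t, U t \is unitarymx by move=> t; have /andP[] := xchooseP (exU t).
have UE : forall t a, (t <= q)%N -> U t *m pre t a = post t a.
  by move=> t a tq; have /andP[_ /implyP/(_ tq)/forallP/(_ a)/eqP] := xchooseP (exU t).
have state : forall a t, (t <= q)%N -> qqa_state (Xs a) U t = post t a.
  move=> a; elim => [_|t IH tq] /=; first by rewrite -(UE 0%N a).
  rewrite IH ?(ltnW tq) // -(UE t.+1 a) // /pre /post /=.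
  by rewrite tq.
split => //; exists U, P; split => //.
move=> s; rewrite state // /post ltnn -quad_T FE PT FPF.
have := HL (g s) => -[_ /(_ (delta_mx s 0))].
by rewrite quad_basis !mxE !eqxx mul1r mulr1 subr_ge0.
Qed.



Section Extract.
Variable C : numClosedFieldType.

Lemma rowsM_mul m N (A : 'M[C]_N) (f : 'I_m -> 'cV[C]_N) :
  rowsM (fun a => A *m f a) = rowsM f *m A^T.
Proof. by apply/matrixP => a c; rewrite !mxE; apply: eq_bigr => d _; rewrite !mxE mulrC. Qed.

Lemma gram_rowsM_unitary m N (U : 'M[C]_N) (f : 'I_m -> 'cV[C]_N) : U \is unitarymx ->
  rowsM (fun a => U *m f a) *m (rowsM (fun a => U *m f a))^t* = rowsM f *m (rowsM f)^t*.
Proof.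
move=> Uu; rewrite rowsM_mul adjmx_mul mulmxA -(mulmxA _ (U^T)).
by have /unitarymxP -> := (etrans (trmx_unitary U) Uu); rewrite mulmx1.
Qed.

Lemma extract n m (Xs : 'I_m -> 'M[C]_n) (T : finType) (g : 'I_m -> T) q eps w :
  (0 < n)%N -> (0 < q)%N -> QQA_exists Xs g q eps w -> P_feasible Xs g q eps.
Proof.
move=> n0 q0 [w0 [U [P [Uu Pproj Psum Hsucc]]]].
pose psi t a := qqa_state (Xs a) U t.
pose M t : 'M[C]_(m * n, w) := \matrix_(r, k)
   psi t (@mxtens_unindex m n r).1 (mxtens_index ((@mxtens_unindex m n r).2, k)) 0.
have vecME0 : forall t a, @vecM C n w m (M t) a = psi t a.
  move=> t a; apply/matrixP => c j; rewrite (ord1 j).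
  by case: (mxtens_indexP c) => i k; rewrite vecM_idx mxE mxtens_indexK.
have vecME : forall t, rowsM (@vecM C n w m (M t)) = rowsM (psi t).
  by move=> t; apply/matrixP => a c; rewrite [LHS]mxE [RHS]mxE vecME0.
have gramM : forall t, ptraceQ (M t *m (M t)^t*) = rowsM (psi t) *m (rowsM (psi t))^t*.
  by move=> t; rewrite ptrace_rows vecME.
have gramO : forall t, (t < q)%N ->
    ptraceQ (Omega Xs *m (M t *m (M t)^t*) *m (Omega Xs)^t*)
    = rowsM (psi t.+1) *m (rowsM (psi t.+1))^t*.
  move=> t tq; have -> : Omega Xs *m (M t *m (M t)^t*) *m (Omega Xs)^t*
      = (Omega Xs *m M t) *m (Omega Xs *m M t)^t* by rewrite adjmx_mul !mulmxA.
  rewrite ptrace_rows.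
  have -> : rowsM (@vecM C n w m (Omega Xs *m M t))
      = rowsM (fun a => kron (Xs a) 1%:M *m psi t a).
    by apply/matrixP => a c; rewrite [LHS]mxE [RHS]mxE vec_Omega vecME0.
  by rewrite -(gram_rowsM_unitary _ (Uu t.+1 tq)).
pose Psi := rowsM (psi q).
have rhoIE : ptraceQ (Omega Xs *m (M q.-1 *m (M q.-1)^t*) *m (Omega Xs)^t*)
    = Psi *m Psi^t*.
  by rewrite gramO ?prednK // -ltnS prednK.
have PTadj : forall z, ((P z)^T)^t* = (P z)^T.
  move=> z; have [adjP _] := Pproj z.
  by rewrite -[in RHS]adjP; apply/matrixP => i j; rewrite !mxE.
have PTT : forall z, (P z)^T *m (P z)^T = (P z)^T.
  by move=> z; have [_ PP] := Pproj z; rewrite -trmx_mul PP.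
exists (fun t => M t *m (M t)^t*),
  (ptraceQ (Omega Xs *m (M q.-1 *m (M q.-1)^t*) *m (Omega Xs)^t*)),
  (fun z => Psi *m (P z)^T *m Psi^t*).
have GamE : forall z, Psi *m (P z)^T *m Psi^t* = (Psi *m (P z)^T) *m (Psi *m (P z)^T)^t*.
  by move=> z; rewrite adjmx_mul PTadj !mulmxA -(mulmxA Psi (P z)^T (P z)^T) PTT.
split; first by move=> t _; exact: psd_YY.
split; first by rewrite rhoIE; exact: psd_YY.
split; first by move=> z; rewrite GamE; exact: psd_YY.
split.
  rewrite gramM; apply/matrixP => a b; rewrite rowsM_gram /psi /=.
  by rewrite gram_unitary ?Uu // e00_gram // !mxE.
split.
  case=> [//|t] /andP[_ tq]; rewrite gramM /adjmx -/(_^t*) gramO //.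
  exact: ltnW.
split; first by [].
split.
  rewrite rhoIE -mulmx_suml -mulmx_sumr.
  have -> : \sum_z (P z)^T = 1%:M.
    rewrite -trmx1 -Psum; apply/matrixP => i j; rewrite [RHS]mxE !summxE.
    by apply: eq_bigr => z _; rewrite mxE.
  by rewrite mulmx1.
move=> z.
rewrite /loewner_ge.
have -> : hadamard (Delta C g z) (Psi *m (P z)^T *m Psi^t*) - (1 - eps) *: Delta C g z
   = diag_mx (\row_a ((g a == z)%:R * ((Psi *m (P z)^T *m Psi^t*) a a - (1 - eps)))).
  apply/matrixP => i j; rewrite !mxE.
  have [->|ne] := eqVneq i j; last by rewrite !mulr0n mulr0 mul0r subrr.
  by rewrite /= !mulr1n mulrBr; congr (_ - _); rewrite mulrC.
apply: psd_diag => a; rewrite mxE.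
have [gz|gz] := eqVneq (g a) z; last by rewrite mul0r.
rewrite mul1r subr_ge0 quad_T -gz; exact: Hsucc.
Qed.

End Extract.


(* S = {Xs s | s < m} (Xs injective), |S| = m, g : S -> T given on indices. *)
Theorem theorem1 (C : numClosedFieldType) (n m : nat) (Xs : 'I_m -> 'M[C]_n)
  (T : finType) (g : 'I_m -> T) (q : nat) (eps : C) :
  (0 < n)%N -> (0 < m)%N -> injective Xs -> (forall s, Xs s \is unitarymx) ->
  (0 < q)%N -> 0 <= eps <= 1 ->
  [/\ (exists w, QQA_exists Xs g q eps w) <-> P_feasible Xs g q eps,
      (forall rho rhoI Gam, P_feasible_sol Xs g q eps rho rhoI Gam ->
         exists w, (w <= maxn (m * n) (ceil_div (\sum_(z : T) \rank (Gam z)) n))%N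
                   /\ QQA_exists Xs g q eps w) &
      ((exists w, QQA_exists Xs g q eps w) ->
         exists w, (w <= maxn (m * n) (ceil_div (m * #|T|) n))%N
                   /\ QQA_exists Xs g q eps w)].
Proof.
move=> n0 m0 inj Xu q0 eps01.
have P2 : forall rho rhoI Gam, P_feasible_sol Xs g q eps rho rhoI Gam ->
    exists w, (w <= maxn (m * n) (ceil_div (\sum_(z : T) \rank (Gam z)) n))%N
              /\ QQA_exists Xs g q eps w.
  by move=> rho rhoI Gam H; exact: construct n0 m0 q0 H.
split.
- split => [[w Hw]|[rho [rhoI [Gam H]]]]; first exact: extract n0 q0 Hw.
  by have [w [_ Hw]] := P2 _ _ _ H; exists w.
- exact: P2.
- move=> [w Hw]; have [rho [rhoI [Gam H]]] := extract n0 q0 Hw.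
  have [w' [Hw' Q]] := P2 _ _ _ H; exists w'; split => //.
  apply: leq_trans Hw' _; rewrite geq_max leq_maxl /=.
  apply: leq_trans (leq_maxr _ _); rewrite /ceil_div leq_div2r // leq_add2r.
  apply: (@leq_trans (\sum_(z : T) m)%N); first by apply: leq_sum => z _; exact: rank_leq_row.
  by rewrite big_const iter_addn_0 mulnC.
Qed.
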